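(* There exists a nonempty tree-shift of finite type containing no periodic tree. For example, take $\mathcal{A}=\{0,1\}$, $A_0=\begin{pmatrix}0&1\\1&0\end{pmatrix}$ and $A_1=\begin{pmatrix}1&0\\0&1\end{pmatrix}$. Then $\mathsf{X}_{A_0,A_1}$ is nonempty and contains no periodic tree.
   Context: $\Sigma=\{0,1\}$ and $\Sigma^*$ is the set of finite words, with $\epsilon$ the empty word. A tree is a map $t:\Sigma^*\to\mathcal{A}$, and we write $t_x=t(x)$. For a word $w$, the shift $\sigma_w$ is defined by $(\sigma_w t)_x=t_{wx}$. A pattern is a map defined on a finite prefix-closed subset of $\Sigma^*$. $\mathsf{X}_{\mathcal{F}}$ is the set of trees in which no pattern of $\mathcal{F}$ occurs at any node. A tree-shift of finite type is $\mathsf{X}_{\mathcal{F}}$ with $\mathcal{F}$ finite. The vertex tree-shift is $\mathsf{X}_{A_0,A_1}=\{t: A_0(t_x,t_{x0})=1,\ A_1(t_x,t_{x1})=1\ \forall x\in\Sigma^*\}$; it is a tree-shift of finite type. A complete prefix code (CPC) is a finite set $P\subseteq\Sigma^*\setminus\{\epsilon\}$ such that no word of $P$ is a prefix of another word of $P$, and every $x\in\Sigma^*$ with $|x|\ge\max_{y\in P}|y|$ has a prefix in $P$. A tree $t\in X$ is periodic if there is a CPC $P$ with $\sigma_x t=t$ for all $x\in P$. *)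

(* Defs.v *)
From Stdlib Require List.
From mathcomp Require Import all_boot.
Set Implicit Arguments. Unset Strict Implicit. Unset Printing Implicit Defensive.

(* Sigma = {0,1} is encoded as bool (false = 0, true = 1); words are seq bool,
   the empty word is [::]. *)
Definition word := seq bool.

Definition tree (A : Type) := word -> A.

Definition shift (A : Type) (w : word) (t : tree A) : tree A :=
  fun x => t (w ++ x).

(* A pattern: a map defined on a finite prefix-closed subset of Sigma^*.
   The domain is the finite list pdom; values outside pdom are irrelevant. *)
Record pattern (A : Type) := Pattern {
  pdom : seq word;
  pval : word -> A;
  pdom_prefix_closed : forall u v : word, (u ++ v) \in pdom -> u \in pdom
}.

Definition occurs_at (A : Type) (p : pattern A) (t : tree A) (x : word) : Prop :=
  forall y, y \in pdom p -> t (x ++ y) = pval p y.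

Definition in_XF (A : Type) (F : seq (pattern A)) (t : tree A) : Prop :=
  forall p, List.In p F -> forall x : word, ~ occurs_at p t x.

Definition is_CPC (P : seq word) : Prop :=
  [/\ (forall y, y \in P -> y <> [::]),
      (forall y z, y \in P -> z \in P -> prefix y z -> y = z) &
      (forall x : word, \max_(y <- P) size y <= size x ->
         exists2 y, y \in P & prefix y x)].

Definition periodic (A : Type) (t : tree A) : Prop :=
  exists P : seq word, is_CPC P /\ forall x, x \in P -> shift x t = t.

(* Main.v *)
Require Import Defs.
From mathcomp Require Import all_boot.

Definition dom2 (c : bool) : seq word := [:: [::]; [:: c]].

Lemma dom2_pc (c : bool) : forall u v : word, (u ++ v) \in dom2 c -> u \in dom2 c.
Proof.
move=> u v; rewrite !inE; case: u => [|a [|b u]] //=;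
  case: v => [|d v] //=; rewrite ?eqseq_cons ?andbF ?andbT ?orbF //.
Qed.

Definition pat (c b1 b2 : bool) : pattern bool :=
  @Pattern bool (dom2 c) (fun w => if w == [::] then b1 else b2) (@dom2_pc c).

Definition F : seq (pattern bool) :=
  [:: pat false false false; pat false true true;
      pat true false true; pat true true false].

Definition t0 : tree bool := fun x => odd (count negb x).

Lemma occ2 c b1 b2 (t : tree bool) x :
  t x = b1 -> t (x ++ [:: c]) = b2 -> occurs_at (pat c b1 b2) t x.
Proof.
move=> h1 h2 y; rewrite !inE => /orP [/eqP->|/eqP->] /=; by rewrite ?cats0.
Qed.

Lemma rules (t : tree bool) : in_XF F t -> forall x,
  t (x ++ [:: false]) = ~~ t x /\ t (x ++ [:: true]) = t x.
Proof.
move=> H x.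
have Hp : forall c b1 b2, List.In (pat c b1 b2) F -> ~ (t x = b1 /\ t (x ++ [:: c]) = b2).
  by move=> c b1 b2 Hin [h1 h2]; apply: (H _ Hin x); apply: occ2.
case Ex: (t x); case E0: (t (x ++ [:: false])); case E1: (t (x ++ [:: true])) => //;
  solve [ exfalso; apply: (Hp _ _ _ _ (conj Ex E0)); simpl; tauto
        | exfalso; apply: (Hp _ _ _ _ (conj Ex E1)); simpl; tauto ].
Qed.

Lemma tval (t : tree bool) : in_XF F t -> forall y,
  t y = t [::] (+) odd (count negb y).
Proof.
move=> H; elim/last_ind => [|y b IH]; first by rewrite /= addbF.
have [h0 h1] := @rules _ H y.
rewrite -cats1 count_cat; case: b => /=.
  by rewrite h1 IH ?addn0.
by rewrite h0 IH ?addn1 /= ?addbN ?addnS /= ?addn0 ?addbN.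
Qed.

Theorem theorem3p3 :
  exists (A : finType) (F : seq (pattern A)),
    (exists t : tree A, in_XF F t) /\
    (forall t : tree A, in_XF F t -> ~ periodic t).
Proof.
exists bool, F; split.
  exists t0 => p Hin x Hocc.
  move: Hin => /= [|[|[|[|[]]]]] Hp; subst p;
    have h0 := Hocc [::] (mem_head _ _);
    have h1 := Hocc [:: _] (mem_last [::] [:: [:: _]]);
    rewrite /= cats0 /t0 count_cat /= in h0 h1;
    move: h0 h1; rewrite ?addn0 ?addn1 /=; case: (odd _) => //.
move=> t H [P [[Hne Hpre Hcomp] Hsh]].
set N := \max_(y <- P) size y.
have [y yP py] := Hcomp (false :: nseq N true) ltac:(by rewrite /= size_nseq).
have := congr1 (fun f => f [::]) (Hsh y yP); rewrite /shift cats0 (@tval _ H y).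
move/prefixP: py => [s Es].
have : count negb (false :: nseq N true) = 1.
  by rewrite /= count_nseq /= mul0n.
rewrite Es count_cat.
case: y yP Es {Hsh} => [yP|a y' yP]; first by have := Hne _ yP.
case=> <- _ /=; case: (count negb y') => [|n] /=.
  by case: (t [::]).
by rewrite addSn.
Qed.
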